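(* Let $k\ge 2$ and $i\in\{1,\ldots,k-1\}$. If $\binom{k}{i}$ is odd and $\binom{k-1}{i}$ is even, then $J(2k,k,i)$ does not admit perfect state transfer.
   Context: $J(2k,k,i)$ is the graph on the $k$-subsets of $\{1,\ldots,2k\}$ with $A\sim B$ iff $|A\cap B|=i$. For a simple graph $X$ with adjacency matrix $A$, let $\mathcal{H}_X(t)=e^{itA}$. $X$ admits perfect state transfer (PST) if $|\mathcal{H}_X(\tau)_{u,v}|=1$ for some vertices $u\ne v$ and some $\tau>0$. *)

(* Defs.v *)
From Stdlib Require Import Reals Factorial.
From HB Require Import structures.
From mathcomp Require Import all_boot.

Set Implicit Arguments.
Unset Strict Implicit.
Unset Printing Implicit Defensive.

Definition Jvert (k : nat) : finType :=
  {A : {set 'I_(2 * k)} | #|A| == k}.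

Definition Jadj (k i : nat) : rel (Jvert k) :=
  fun A B => #|val A :&: val B| == i.
Arguments Jadj : clear implicits.

(* Entry (u,v) of A^n, where A is the 0/1 adjacency matrix of the graph
   with vertex set T and adjacency relation adj (number of walks). *)
Fixpoint adjpow (T : finType) (adj : rel T) (n : nat) (u v : T) : nat :=
  match n with
  | 0 => (u == v : nat)
  | n'.+1 => \sum_(w : T) (adj u w : nat) * adjpow adj n' w v
  end.

Local Open Scope R_scope.

Definition re_ipow (n : nat) : R :=
  if (n %% 4 == 0)%N then 1 else if (n %% 4 == 2)%N then (-1) else 0.
Definition im_ipow (n : nat) : R :=
  if (n %% 4 == 1)%N then 1 else if (n %% 4 == 3)%N then (-1) else 0.

(* Partial sums of the real / imaginary parts of
   (e^{itA})_{uv} = sum_n (it)^n / n! (A^n)_{uv}. *)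
Definition H_re_partial (T : finType) (adj : rel T) (t : R) (u v : T)
  (N : nat) : R :=
  sum_f_R0 (fun n => (re_ipow n * t ^ n / INR (fact n)
                      * INR (adjpow adj n u v))) N.
Definition H_im_partial (T : finType) (adj : rel T) (t : R) (u v : T)
  (N : nat) : R :=
  sum_f_R0 (fun n => (im_ipow n * t ^ n / INR (fact n)
                      * INR (adjpow adj n u v))) N.

(* Perfect state transfer: |H(tau)_{u,v}| = 1 for some u <> v, tau > 0,
   where H(tau)_{u,v} = a + i b is the limit of the exponential series. *)
Definition admits_PST (T : finType) (adj : rel T) : Prop :=
  exists (u v : T) (tau : R), u <> v /\ (0 < tau) /\
    exists a b : R,
      Un_cv (H_re_partial adj tau u v) a /\
      Un_cv (H_im_partial adj tau u v) b /\
      (a ^ 2 + b ^ 2 = 1).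

(* Main.v *)
Require Import Defs.
From Stdlib Require Import Reals Factorial Lra ZArith Lia Ring FunctionalExtensionality.
From Coquelicot Require Import Coquelicot.
From HB Require Import structures.
From mathcomp Require Import all_boot.
From mathcomp Require Import zify.

Set Implicit Arguments.
Unset Strict Implicit.
Unset Printing Implicit Defensive.
Open Scope nat_scope.

Definition cnt (n p m : nat) : nat := if p <= m then 'C(n - p, m - p) else 0.

Lemma UDK (X : finType) (U Q Z : {set X}) : Z \subset U :\: Q -> (Z :|: Q) :\: Q = Z.
Proof.
move=> H; apply/setP => y; rewrite !inE.
case yZ: (y \in Z); case yQ: (y \in Q) => //=.
by move: (subsetP H y yZ); rewrite !inE yQ.
Qed.

Lemma count_forced (X : finType) (U Q : {set X}) (m : nat) :
  Q \subset U ->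
  #|[set Y : {set X} | [&& Y \subset U, #|Y| == m & Q \subset Y]]| = cnt #|U| #|Q| m.
Proof.
move=> QU; rewrite /cnt; case: ifP => Hm; last first.
  apply/eqP; rewrite cards_eq0; apply/eqP/setP => Y; rewrite !inE.
  apply/negbTE; apply/negP => /and3P [_ /eqP HY QY].
  by move: (subset_leq_card QY); rewrite HY Hm.
have HUQ : #|U :\: Q| = #|U| - #|Q| by rewrite cardsD (setIidPr QU).
rewrite -HUQ -cards_draws.
set D := [set Z : {set X} | Z \subset U :\: Q & #|Z| == m - #|Q|].
have inj : {in D &, injective (fun Z => Z :|: Q)}.
  move=> Z1 Z2; rewrite !inE => /andP [H1 _] /andP [H2 _] E.
  have E1 : (Z1 :|: Q) :\: Q = Z1 by apply: UDK H1.
  have E2 : (Z2 :|: Q) :\: Q = Z2 by apply: UDK H2.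
  by rewrite -E1 E E2.
rewrite -(card_in_imset inj); apply: eq_card => Y; rewrite inE.
apply/and3P/imsetP.
  move=> [YU /eqP HY QY]; exists (Y :\: Q).
    rewrite inE; apply/andP; split; first by apply: setSD.
    by rewrite cardsD (setIidPr QY) HY.
  apply/setP => y; rewrite !inE; case yQ: (y \in Q) => /=; last by rewrite orbF.
  by rewrite (subsetP QY y yQ).
move=> [Z]; rewrite inE => /andP [ZUQ /eqP HZ] ->.
have ZU : Z \subset U by apply: (subset_trans ZUQ); apply: subsetDl.
have Hdisj : Z :&: Q = set0.
  apply/setP => y; rewrite !inE; apply/negbTE/negP => /andP [yZ yQ].
  by move: (subsetP ZUQ y yZ); rewrite !inE yQ.
split.
- by rewrite subUset ZU QU.
- by rewrite cardsU Hdisj cards0 subn0 HZ subnK.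
- exact: subsetUr.
Qed.


Section JCount.
Variables (k i : nat).
Hypothesis ik : i <= k.
Local Notation X := ('I_(2 * k)).
Local Notation V := (Jvert k).

Lemma cardz (z : V) : #|val z| = k.
Proof. by have := valP z; move/eqP. Qed.

Lemma cardzC (z : V) : #|~: val z| = k.
Proof. have := cardsC (val z); rewrite card_ord cardz => H; lia. Qed.

Definition Nc (z : V) (P : {set X}) : nat :=
  #|[set w : V | Jadj k i z w && (P \subset val w)]|.

Lemma Nc_formula (z : V) (P : {set X}) :
  Nc z P = cnt k #|P :&: val z| i * cnt k #|P :\: val z| (k - i).
Proof.
set Z := val z.
have -> : Nc z P = #|[set D : {set X} | [&& #|D| == k, #|Z :&: D| == i & P \subset D]]|.
  rewrite /Nc -(card_imset _ val_inj); apply: eq_card => D; rewrite inE.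
  apply/imsetP/and3P.
    move=> [w]; rewrite inE => /andP [Hadj HP] ->.
    by split => //; apply: (valP w).
  move=> [HD Hi HP].
  exists (Sub D HD : V) => //.
  by rewrite inE /Jadj /=; apply/andP.
set S1 := [set Y : {set X} | [&& Y \subset Z, #|Y| == i & P :&: Z \subset Y]].
set S2 := [set Y : {set X} | [&& Y \subset ~: Z, #|Y| == k - i & P :\: Z \subset Y]].
have -> : cnt k #|P :&: Z| i = #|S1|.
  by rewrite count_forced ?cardz // subsetIr.
have -> : cnt k #|P :\: Z| (k - i) = #|S2|.
  rewrite count_forced ?cardzC //; rewrite setDE; exact: subsetIr.
rewrite -cardsX.
have inj : {in setX S1 S2 &, injective (fun p : {set X} * {set X} => p.1 :|: p.2)}.
  move=> [X1 Y1] [X2 Y2]; rewrite !inE /= => /andP [/and3P [HX1 _ _] /and3P [HY1 _ _]]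
     /andP [/and3P [HX2 _ _] /and3P [HY2 _ _]] E.
  have EX : forall (A B : {set X}), A \subset Z -> B \subset ~: Z -> (A :|: B) :&: Z = A.
    move=> A B HA HB; apply/setP => y; rewrite !inE.
    have hA := subsetP HA y; have hB := subsetP HB y; rewrite !inE in hA hB.
    by case: (y \in A) hA; case: (y \in B) hB; case: (y \in Z) => //= h1 h2; first [by have := h1 isT | by have := h2 isT].
  have EY : forall (A B : {set X}), A \subset Z -> B \subset ~: Z -> (A :|: B) :\: Z = B.
    move=> A B HA HB; apply/setP => y; rewrite !inE.
    have hA := subsetP HA y; have hB := subsetP HB y; rewrite !inE in hA hB.
    by case: (y \in A) hA; case: (y \in B) hB; case: (y \in Z) => //= h1 h2; first [by have := h1 isT | by have := h2 isT].
  have e1 := EX X1 Y1 HX1 HY1; have e2 := EX X2 Y2 HX2 HY2.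
  have f1 := EY X1 Y1 HX1 HY1; have f2 := EY X2 Y2 HX2 HY2.
  rewrite E in e1 f1.
  by rewrite -e1 e2 -f1 f2.
rewrite -(card_in_imset inj); apply: eq_card => D; rewrite inE.
apply/and3P/imsetP.
  move=> [/eqP HD /eqP Hi HP].
  exists (Z :&: D, D :\: Z).
    rewrite !inE; apply/andP; split; apply/and3P; split.
    - exact: subsetIl.
    - by rewrite Hi.
    - by apply/subsetP => y; rewrite !inE => /andP [yP yZ]; rewrite yZ (subsetP HP y yP).
    - by apply/subsetP => y; rewrite !inE => /andP [].
    - have := cardsD D Z; rewrite setIC Hi HD => ->; done.
    - by apply/subsetP => y; rewrite !inE => /andP [yZ yP]; rewrite yZ (subsetP HP y yP).
  rewrite /=; apply/setP => y; rewrite !inE.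
  by case: (y \in Z); case: (y \in D).
move=> [[A B]]; rewrite !inE /= => /andP [/and3P [HA /eqP cA PA] /and3P [HB /eqP cB PB]] ->.
have Hd : A :&: B = set0.
  apply/setP => y; rewrite !inE; apply/negbTE/negP => /andP [yA yB].
  by move: (subsetP HB y yB); rewrite inE (subsetP HA y yA).
have EA : Z :&: (A :|: B) = A.
  apply/setP => y; rewrite !inE.
  case yA: (y \in A); first by rewrite (subsetP HA y yA).
  case yB: (y \in B); rewrite ?andbF //.
  by move: (subsetP HB y yB); rewrite inE => /negbTE ->.
split.
- by rewrite cardsU Hd cards0 subn0 cA cB subnKC.
- by rewrite EA cA.
- apply/subsetP => y yP; rewrite inE.
  case yZ: (y \in Z).
    by rewrite (subsetP PA y) // inE yP yZ.
  by rewrite (subsetP PB y) ?orbT // !inE yP yZ.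
Qed.
End JCount.


Lemma binfacts (k i : nat) : 2 <= k -> 1 <= i -> i <= k - 1 ->
  [/\ cnt k 0 i = 'C(k, i), cnt k 0 (k - i) = 'C(k, i),
      cnt k 1 i = 'C(k - 1, i - 1), cnt k 1 (k - i) = 'C(k - 1, i) &
   [/\ 'C(k, i) = 'C(k - 1, i - 1) + 'C(k - 1, i),
       'C(k - 1, i - 1) = cnt k 2 i + 'C(k - 2, i - 1),
       'C(k - 1, i) = 'C(k - 2, i - 1) + cnt k 2 (k - i),
       k * 'C(k - 1, i - 1) = i * 'C(k, i) &
       (k - 1) * 'C(k - 2, i - 1) = i * 'C(k - 1, i)]].
Proof.
case: k => [|[|K]] //; case: i => [|I] // _ _ HI.
have HIK : I <= K by move: HI; rewrite !subSS subn0.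
rewrite !subSS !subn0.
split.
- by rewrite /cnt subn0.
- rewrite /cnt /= !subn0; have -> : K.+1 - I = K.+2 - I.+1 by [].
  rewrite bin_sub //; lia.
- rewrite /cnt; have -> : (1 <= I.+1) = true by []. f_equal; lia.
- rewrite /cnt; case: ifP => H; last by exfalso; move: H; rewrite subn_gt0 ltnS HIK.
  have -> : K.+1 - I - 1 = K.+1 - I.+1 by lia.
  have -> : K.+2 - 1 = K.+1 by lia.
  by rewrite bin_sub.
split.
- by rewrite binS addnC.
- rewrite /cnt; case: I HI HIK => [|I'] HI HIK /=.
    by rewrite !bin0.
  rewrite binS addnC; f_equal; f_equal; lia.
- rewrite /cnt binS addnC; f_equal.
  case: (ltnP 1 (K.+1 - I)) => H.
    have -> : K.+1 - I - 2 = K - I.+1 by lia.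
    have -> : K.+2 - 2 = K by lia.
    rewrite bin_sub //; lia.
  rewrite bin_small //; lia.
- by rewrite mul_bin_diag.
- by rewrite (mul_bin_diag K.+1 I).
Qed.



Lemma RplusA : associative Rplus. Proof. by move=> x y z; rewrite Rplus_assoc. Qed.
HB.instance Definition _ := Monoid.isComLaw.Build R R0 Rplus RplusA Rplus_comm Rplus_0_l.

Local Open Scope R_scope.

Notation "\rsum_ ( i : T ) F" := (\big[Rplus/R0]_(i : T) F)
  (at level 41, F at level 41, i, T at level 50).


Lemma rsum_seq_mull (I : Type) (s : seq I) (c : R) (F : I -> R) :
  c * \big[Rplus/R0]_(w <- s) F w = \big[Rplus/R0]_(w <- s) (c * F w).
Proof.
elim: s => [|x s IH]; first by rewrite !big_nil; ring.
by rewrite !big_cons -IH /=; ring.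
Qed.

Lemma rsum_mull (T : finType) (c : R) (F : T -> R) :
  c * (\rsum_(w : T) F w) = \rsum_(w : T) (c * F w).
Proof. exact: rsum_seq_mull. Qed.

Lemma rsum_plus (T : finType) (F G : T -> R) :
  \rsum_(w : T) (F w + G w) = \rsum_(w : T) F w + \rsum_(w : T) G w.
Proof. by rewrite big_split. Qed.

Lemma rsum_opp (T : finType) (F : T -> R) :
  \rsum_(w : T) (- F w) = - \rsum_(w : T) F w.
Proof.
rewrite /index_enum; elim: (Finite.enum T) => [|x s IH]; first by rewrite !big_nil; ring.
by rewrite !big_cons IH /=; ring.
Qed.

Lemma rsum_ext (T : finType) (F G : T -> R) :
  (forall w, F w = G w) -> \rsum_(w : T) F w = \rsum_(w : T) G w.
Proof. by move=> H; apply: eq_bigr => w _. Qed.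

Lemma INR_sum (T : finType) (F : T -> nat) :
  INR (\sum_(w : T) F w)%N = \rsum_(w : T) INR (F w).
Proof.
rewrite /index_enum; elim: (Finite.enum T) => [|x s IH]; first by rewrite !big_nil.
by rewrite !big_cons plus_INR IH.
Qed.

Lemma rsum_ge0 (T : finType) (F : T -> R) :
  (forall w, 0 <= F w) -> 0 <= \rsum_(w : T) F w.
Proof.
move=> H; apply: (big_ind (fun x => 0 <= x)) => //; [apply: Rle_refl| move=> x y; apply: Rplus_le_le_0_compat].
Qed.

Lemma rsum_D1 (T : finType) (j : T) (F : T -> R) :
  \rsum_(w : T) F w = F j + \big[Rplus/R0]_(w | w != j) F w.
Proof. by rewrite (bigD1 j). Qed.

Lemma rsum_sub_ge0 (T : finType) (P : pred T) (F : T -> R) :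
  (forall w, 0 <= F w) -> 0 <= \big[Rplus/R0]_(w | P w) F w.
Proof.
move=> H; apply: (big_ind (fun x => 0 <= x)) => //; [apply: Rle_refl| move=> x y; apply: Rplus_le_le_0_compat].
Qed.

Lemma rsum_sub_eq0 (T : finType) (P : pred T) (F : T -> R) :
  (forall w, 0 <= F w) -> \big[Rplus/R0]_(w | P w) F w = 0 ->
  forall w, P w -> F w = 0.
Proof.
move=> H H0 w Pw; move: H0; rewrite (bigD1 w) //= => H1.
have := rsum_sub_ge0 (fun z => P z && (z != w)) H; have := H w; lra.
Qed.


Section Walks.
Variables (T : finType) (adj : rel T).

Lemma adjpow_right n u v :
  adjpow adj n.+1 u v = (\sum_(w : T) adjpow adj n u w * adj w v)%N.
Proof.
elim: n u v => [|n IH] u v.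
  rewrite /= (bigD1 v) //= eqxx muln1 big1 ?addn0; last first.
    by move=> w /negbTE ->; rewrite muln0.
  rewrite (bigD1 u) //= eqxx mul1n big1 ?addn0 //.
  by move=> w; rewrite eq_sym => /negbTE ->.
change (\sum_(w : T) adj u w * adjpow adj n.+1 w v = \sum_(w : T) adjpow adj n.+1 u w * adj w v)%N.
under eq_bigr => w _ do rewrite IH big_distrr /=.
rewrite exchange_big /=; apply: eq_bigr => z _.
by rewrite big_distrl /=; apply: eq_bigr => w _; rewrite mulnA.
Qed.

Lemma adjpow_bound n u v : (adjpow adj n u v <= #|T| ^ n)%N.
Proof.
elim: n u v => [|n IH] u v /=; first by case: (u == v).
apply: (@leq_trans (\sum_(w : T) #|T| ^ n)).
  apply: leq_sum => w _.
  by case: (adj u w) => /=; rewrite ?mul1n ?mul0n.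
by rewrite sum_nat_const expnS.
Qed.
End Walks.


Ltac req := match goal with |- ?a = ?b => change (@eq R a b) end.

Lemma d_eq (f : R -> R) x l l' : is_derive f x l -> l = l' -> is_derive f x l'.
Proof. by move=> H <-. Qed.

Lemma d_plus (f g : R -> R) x a b : is_derive f x a -> is_derive g x b ->
  is_derive (fun t => f t + g t) x (a + b).
Proof. move=> Hf Hg; exact: (is_derive_plus f g x a b Hf Hg). Qed.

Lemma d_opp (f : R -> R) x a : is_derive f x a ->
  is_derive (fun t => - f t) x (- a).
Proof. move=> Hf; exact: (is_derive_opp f x a Hf). Qed.

Lemma d_mult (f g : R -> R) x a b : is_derive f x a -> is_derive g x b ->
  is_derive (fun t => f t * g t) x (a * g x + f x * b).
Proof. move=> Hf Hg; exact: (is_derive_mult f g x a b Hf Hg Rmult_comm). Qed.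

Lemma d_const (c x : R) : is_derive (fun _ => c) x 0.
Proof. exact: (is_derive_const c x). Qed.

Lemma d_cos (th x : R) : is_derive (fun t => cos (th * t)) x (- th * sin (th * x)).
Proof.
have H1 : is_derive (fun t => th * t) x th.
  apply: (d_eq (is_derive_scal id x th 1 (is_derive_id x))); exact: Rmult_1_r.
apply: (d_eq (is_derive_comp cos (fun t => th * t) x _ _ (is_derive_cos _) H1)).
rewrite /scal /= /mult /=; ring.
Qed.

Lemma d_sin (th x : R) : is_derive (fun t => sin (th * t)) x (th * cos (th * x)).
Proof.
have H1 : is_derive (fun t => th * t) x th.
  apply: (d_eq (is_derive_scal id x th 1 (is_derive_id x))); exact: Rmult_1_r.
apply: (d_eq (is_derive_comp sin (fun t => th * t) x _ _ (is_derive_sin _) H1)).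
by rewrite /scal /= /mult /=.
Qed.

Lemma d_rsum (T : finType) (f : T -> R -> R) (f' : T -> R) x :
  (forall w, is_derive (f w) x (f' w)) ->
  is_derive (fun t => \rsum_(w : T) f w t) x (\rsum_(w : T) f' w).
Proof.
move=> H; rewrite /index_enum; elim: (Finite.enum T) => [|w s IH].
  rewrite big_nil; apply: (is_derive_ext (fun _ => R0)); first by move=> t; rewrite big_nil.
  exact: d_const.
rewrite big_cons; apply: (is_derive_ext (fun t => f w t + \big[Rplus/R0]_(j <- s) f j t)).
  by move=> t; rewrite big_cons.
exact: d_plus.
Qed.

Lemma const_deriv0 (f : R -> R) (b : R) : 0 < b -> (forall t, is_derive f t 0) -> f 0 = f b.
Proof. move=> Hb H; apply: eq_is_derive => // t _; exact: H. Qed.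


Lemma re_ipow_S n : re_ipow n.+1 = - im_ipow n.
Proof.
rewrite /re_ipow /im_ipow -addn1 -modnDml.
have : (n %% 4 < 4)%N by rewrite ltn_pmod.
case: (n %% 4)%N => [|[|[|[|r]]]] //= _; lra.
Qed.

Lemma im_ipow_S n : im_ipow n.+1 = re_ipow n.
Proof.
rewrite /re_ipow /im_ipow -addn1 -modnDml.
have : (n %% 4 < 4)%N by rewrite ltn_pmod.
case: (n %% 4)%N => [|[|[|[|r]]]] //= _; lra.
Qed.

Lemma re_ipow_bound n : Rabs (re_ipow n) <= 1.
Proof.
rewrite /re_ipow; case: ifP => _; first by rewrite Rabs_R1; lra.
case: ifP => _; last by rewrite Rabs_R0; lra.
by rewrite Rabs_Ropp Rabs_R1; lra.
Qed.

Lemma im_ipow_bound n : Rabs (im_ipow n) <= 1.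
Proof.
rewrite /im_ipow; case: ifP => _; first by rewrite Rabs_R1; lra.
case: ifP => _; last by rewrite Rabs_R0; lra.
by rewrite Rabs_Ropp Rabs_R1; lra.
Qed.

Lemma term_le_sum (f : nat -> R) n : (forall k, 0 <= f k) -> f n <= sum_f_R0 f n.
Proof.
move=> H; case: n => [|n] /=; first lra.
have := cond_pos_sum f n H; lra.
Qed.

Lemma rad_gen (a : nat -> R) (M : R) : 0 <= M ->
  (forall n, Rabs (a n) <= M ^ n / INR (fact n)) ->
  forall x, Rbar_lt (Rabs x) (CV_radius a).
Proof.
move=> HM Ha x.
set r := Rabs x + 1.
have Hr : 0 < r by rewrite /r; have := Rabs_pos x; lra.
have Hub : Rbar_le r (CV_radius a).
  apply: (proj1 (CV_radius_bounded a)).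
  exists (exp (M * r)) => n.
  rewrite Rabs_mult -RPow_abs (Rabs_right r); last lra.
  apply: (Rle_trans _ ((M * r) ^ n / INR (fact n))).
    rewrite Rpow_mult_distr /Rdiv.
    have Hp : 0 <= r ^ n by apply: pow_le; lra.
    have := Ha n; rewrite /Rdiv => Han.
    have := Rmult_le_compat_r _ _ _ Hp Han; lra.
  apply: (Rle_trans _ (sum_f_R0 (fun k => (M * r) ^ k / INR (fact k)) n)).
    refine (@term_le_sum (fun k => (M * r) ^ k / INR (fact k)) n _) => k.
    apply: Rmult_le_pos; first by apply: pow_le; apply: Rmult_le_pos; lra.
    by apply: Rlt_le; apply: Rinv_0_lt_compat; apply: INR_fact_lt_0.
  apply: exp_ge_taylor; apply: Rmult_le_pos; lra.
apply: (Rbar_lt_le_trans _ r) => //=; rewrite /r; lra.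
Qed.

Lemma PSeries_sum (I : Type) (s : seq I) (c : I -> R) (f : I -> nat -> R) x :
  (forall w, ex_pseries (f w) x) ->
  ex_pseries (fun n => \big[Rplus/R0]_(w <- s) (c w * f w n)) x /\
  PSeries (fun n => \big[Rplus/R0]_(w <- s) (c w * f w n)) x =
    \big[Rplus/R0]_(w <- s) (c w * PSeries (f w) x).
Proof.
move=> Hex; elim: s => [|w s [IH1 IH2]].
  rewrite big_nil; split.
    apply: (ex_pseries_ext (fun _ => 0)); first by move=> n; rewrite big_nil.
    by apply: CV_radius_inside; rewrite CV_radius_const_0.
  by rewrite (PSeries_ext _ (fun _ => 0)) ?PSeries_const_0 // => n; rewrite big_nil.
have Heq : forall n, \big[Rplus/R0]_(j <- (w :: s)) (c j * f j n) =
    PS_plus (PS_scal (c w) (f w)) (fun n => \big[Rplus/R0]_(j <- s) (c j * f j n)) n.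
  by move=> n; rewrite big_cons.
have Hs : ex_pseries (PS_scal (c w) (f w)) x.
  by apply: ex_pseries_scal => //; apply: Rmult_comm.
split.
  apply: (ex_pseries_ext _ _ _ (fun n => esym (Heq n))).
  exact: ex_pseries_plus.
rewrite (PSeries_ext _ _ _ Heq) PSeries_plus // PSeries_scal IH2 big_cons //.
Qed.

Section Series.
Variables (T : finType) (adj : rel T).

Definition ca (u v : T) (n : nat) : R := re_ipow n / INR (fact n) * INR (adjpow adj n u v).
Definition sa (u v : T) (n : nat) : R := im_ipow n / INR (fact n) * INR (adjpow adj n u v).
Definition Cr (u v : T) (t : R) : R := PSeries (ca u v) t.
Definition Si (u v : T) (t : R) : R := PSeries (sa u v) t.

Lemma W_bound n u v : INR (adjpow adj n u v) <= INR #|T| ^ n.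
Proof.
have -> : INR #|T| ^ n = INR (#|T| ^ n)%N.
  by elim: n => [|n IH] //=; rewrite expnS mult_INR IH.
by apply: le_INR; apply/leP; apply: adjpow_bound.
Qed.

Lemma coef_bound (r : nat -> R) u v n : Rabs (r n) <= 1 ->
  Rabs (r n / INR (fact n) * INR (adjpow adj n u v)) <= INR #|T| ^ n / INR (fact n).
Proof.
move=> Hr.
have Hf : 0 < INR (fact n) by apply: INR_fact_lt_0.
have HW := W_bound n u v.
have HW0 : 0 <= INR (adjpow adj n u v) by apply: pos_INR.
rewrite Rabs_mult (Rabs_right (INR _)); last lra.
rewrite /Rdiv Rabs_mult (Rabs_right (/ _)); last by apply: Rle_ge; apply: Rlt_le; apply: Rinv_0_lt_compat.
have Hi : 0 < / INR (fact n) by apply: Rinv_0_lt_compat.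
have Ha := Rabs_pos (r n).
apply: (Rle_trans _ (1 * / INR (fact n) * INR (adjpow adj n u v))).
  apply: Rmult_le_compat_r => //; apply: Rmult_le_compat_r; lra.
have := Rmult_le_compat_l _ _ _ (Rlt_le _ _ Hi) HW; lra.
Qed.

Lemma rad_ca u v x : Rbar_lt (Rabs x) (CV_radius (ca u v)).
Proof.
apply: (rad_gen (M := INR #|T|)); first exact: pos_INR.
move=> n; apply: coef_bound; exact: re_ipow_bound.
Qed.

Lemma rad_sa u v x : Rbar_lt (Rabs x) (CV_radius (sa u v)).
Proof.
apply: (rad_gen (M := INR #|T|)); first exact: pos_INR.
move=> n; apply: coef_bound; exact: im_ipow_bound.
Qed.

Lemma Cr_cv t u v : Un_cv (H_re_partial adj t u v) (Cr u v t).
Proof.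
have H := PSeries_correct _ _ (CV_radius_inside _ _ (rad_ca u v t)).
move/is_pseries_Reals: H => H.
have -> : H_re_partial adj t u v = (fun N => sum_f_R0 (fun n => ca u v n * t ^ n) N).
  apply: functional_extensionality => N; rewrite /H_re_partial.
  apply: PartSum.sum_eq => n _; rewrite /ca /Rdiv; ring.
exact: H.
Qed.

Lemma Si_cv t u v : Un_cv (H_im_partial adj t u v) (Si u v t).
Proof.
have H := PSeries_correct _ _ (CV_radius_inside _ _ (rad_sa u v t)).
move/is_pseries_Reals: H => H.
have -> : H_im_partial adj t u v = (fun N => sum_f_R0 (fun n => sa u v n * t ^ n) N).
  apply: functional_extensionality => N; rewrite /H_im_partial.
  apply: PartSum.sum_eq => n _; rewrite /sa /Rdiv; ring.
exact: H.
Qed.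

Lemma fact_S_R n : INR (fact n.+1) = INR n.+1 * INR (fact n).
Proof. by rewrite fact_simpl mult_INR. Qed.

Lemma PS_derive_ca u v n :
  PS_derive (ca u v) n = \big[Rplus/R0]_(w <- index_enum T) (- INR (adj w v) * sa u w n).
Proof.
rewrite /PS_derive /ca /sa re_ipow_S adjpow_right INR_sum fact_S_R.
have H1 : INR n.+1 <> 0 by apply: not_0_INR.
have H2 := INR_fact_neq_0 n.
set S := \big[Rplus/R0]_(i <- index_enum T) _.
have -> : INR n.+1 * (- im_ipow n / (INR n.+1 * INR (fact n)) * S) = (- im_ipow n / INR (fact n)) * S.
  by field.
rewrite /S rsum_seq_mull; apply: eq_bigr => w _; rewrite mult_INR /Rdiv; ring.
Qed.

Lemma PS_derive_sa u v n :
  PS_derive (sa u v) n = \big[Rplus/R0]_(w <- index_enum T) (INR (adj w v) * ca u w n).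
Proof.
rewrite /PS_derive /ca /sa im_ipow_S adjpow_right INR_sum fact_S_R.
have H1 : INR n.+1 <> 0 by apply: not_0_INR.
have H2 := INR_fact_neq_0 n.
set S := \big[Rplus/R0]_(i <- index_enum T) _.
have -> : INR n.+1 * (re_ipow n / (INR n.+1 * INR (fact n)) * S) = (re_ipow n / INR (fact n)) * S.
  by field.
rewrite /S rsum_seq_mull; apply: eq_bigr => w _; rewrite mult_INR /Rdiv; ring.
Qed.

Lemma Cr_deriv u v t :
  is_derive (Cr u v) t (\rsum_(w : T) (- INR (adj w v) * Si u w t)).
Proof.
have H := is_derive_PSeries (ca u v) t (rad_ca u v t).
rewrite (PSeries_ext _ _ _ (PS_derive_ca u v)) in H.
have [_ E] := @PSeries_sum T (index_enum T) (fun w => - INR (adj w v)) (fun w => sa u w) t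
  (fun w => CV_radius_inside _ _ (rad_sa u w t)).
by rewrite E in H.
Qed.

Lemma Si_deriv u v t :
  is_derive (Si u v) t (\rsum_(w : T) (INR (adj w v) * Cr u w t)).
Proof.
have H := is_derive_PSeries (sa u v) t (rad_sa u v t).
rewrite (PSeries_ext _ _ _ (PS_derive_sa u v)) in H.
have [_ E] := @PSeries_sum T (index_enum T) (fun w => INR (adj w v)) (fun w => ca u w) t
  (fun w => CV_radius_inside _ _ (rad_ca u w t)).
by rewrite E in H.
Qed.

Lemma Cr0 u v : Cr u v 0 = INR (u == v).
Proof. rewrite /Cr PSeries_0 /ca /re_ipow /=; field. Qed.

Lemma Si0 u v : Si u v 0 = 0.
Proof. rewrite /Si PSeries_0 /sa /im_ipow /=; field. Qed.


Lemma rsum_mulr (c : R) (F : T -> R) :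
  (\rsum_(w : T) F w) * c = \rsum_(w : T) (F w * c).
Proof. by rewrite Rmult_comm rsum_mull; apply: eq_bigr => w _; ring. Qed.

Lemma rsum_delta (x : T -> R) u : \rsum_(w : T) (INR (u == w) * x w) = x u.
Proof.
rewrite (rsum_D1 u) eqxx big1 /=; first ring.
by move=> w; rewrite eq_sym => /negbTE ->; rewrite /=; ring.
Qed.

Lemma unitary (Hsym : forall x y, adj x y = adj y x) u t : 0 < t ->
  \rsum_(w : T) (Cr u w t * Cr u w t + Si u w t * Si u w t) = 1.
Proof.
move=> Ht.
set F := fun t => \rsum_(w : T) (Cr u w t * Cr u w t + Si u w t * Si u w t).
have F0 : F 0 = 1.
  rewrite /F; under eq_bigr => w _ do rewrite Cr0 Si0.
  rewrite -[1](rsum_delta (fun _ => 1) u).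
  by apply: eq_bigr => w _; case: (u == w) => /=; ring.
rewrite -F0; symmetry; apply: const_deriv0 => // s.
have D := @d_rsum T (fun w t => Cr u w t * Cr u w t + Si u w t * Si u w t) _ s
  (fun w => d_plus (d_mult (Cr_deriv u w s) (Cr_deriv u w s))
                   (d_mult (Si_deriv u w s) (Si_deriv u w s))).
apply: (d_eq D).
set X := \rsum_(w : T) \rsum_(z : T) (INR (adj z w) * Cr u w s * Si u z s).
set Y := \rsum_(w : T) \rsum_(z : T) (INR (adj z w) * Si u w s * Cr u z s).
have HXY : X = Y.
  rewrite /X /Y exchange_big /=; apply: eq_bigr => w _; apply: eq_bigr => z _.
  by rewrite Hsym; ring.
have -> : \rsum_(w : T)
   ((\rsum_(w0 : T) (- INR (adj w0 w) * Si u w0 s)) * Cr u w s +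
    Cr u w s * (\rsum_(w0 : T) (- INR (adj w0 w) * Si u w0 s)) +
    ((\rsum_(w0 : T) (INR (adj w0 w) * Cr u w0 s)) * Si u w s +
     Si u w s * (\rsum_(w0 : T) (INR (adj w0 w) * Cr u w0 s)))) = -2 * X + 2 * Y.
  rewrite /X /Y !rsum_mull -rsum_plus; apply: eq_bigr => w _.
  rewrite !rsum_mulr !rsum_mull -!rsum_plus; apply: eq_bigr => z _; ring.
rewrite HXY; req; ring.
Qed.

Lemma eigen_evol (x : T -> R) (th : R) u t :
  (forall z, \rsum_(w : T) (INR (adj z w) * x w) = th * x z) -> 0 < t ->
  \rsum_(w : T) (Cr u w t * x w) = x u * cos (th * t) /\
  \rsum_(w : T) (Si u w t * x w) = x u * sin (th * t).
Proof.
move=> Heig Ht.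
set G := fun t => \rsum_(w : T) (Cr u w t * x w).
set K := fun t => \rsum_(w : T) (Si u w t * x w).
have DG : forall s, is_derive G s (- th * K s).
  move=> s.
  have D := @d_rsum T (fun w t => Cr u w t * x w) _ s
    (fun w => d_mult (Cr_deriv u w s) (d_const (x w) s)).
  apply: (d_eq D); rewrite /K.
  under eq_bigr => w _ do rewrite Rmult_0_r Rplus_0_r rsum_mulr.
  rewrite exchange_big /= rsum_mull; apply: eq_bigr => z _.
  have -> : - th * (Si u z s * x z) = - Si u z s * (th * x z) by ring.
  rewrite -Heig rsum_mull; apply: eq_bigr => w _; ring.
have DK : forall s, is_derive K s (th * G s).
  move=> s.
  have D := @d_rsum T (fun w t => Si u w t * x w) _ s
    (fun w => d_mult (Si_deriv u w s) (d_const (x w) s)).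
  apply: (d_eq D); rewrite /G.
  under eq_bigr => w _ do rewrite Rmult_0_r Rplus_0_r rsum_mulr.
  rewrite exchange_big /= rsum_mull; apply: eq_bigr => z _.
  have -> : th * (Cr u z s * x z) = Cr u z s * (th * x z) by ring.
  rewrite -Heig rsum_mull; apply: eq_bigr => w _; ring.
set E := fun t => (G t - x u * cos (th * t)) * (G t - x u * cos (th * t)) +
                  (K t - x u * sin (th * t)) * (K t - x u * sin (th * t)).
have E0 : E 0 = 0.
  rewrite /E /G /K Rmult_0_r cos_0 sin_0.
  have -> : \rsum_(w : T) (Cr u w 0 * x w) = x u.
    rewrite -(rsum_delta x u); apply: eq_bigr => w _; by rewrite Cr0.
  have -> : \rsum_(w : T) (Si u w 0 * x w) = 0.
    by rewrite big1 // => w _; rewrite Si0; ring.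
  ring.
have Et : E 0 = E t.
  apply: const_deriv0 => // s.
  have Dg : is_derive (fun t => G t - x u * cos (th * t)) s (- th * K s - x u * (- th * sin (th * s))).
    apply: (d_eq (d_plus (DG s) (d_opp (is_derive_scal _ s (x u) _ (d_cos th s))))); req; ring.
  have Dk : is_derive (fun t => K t - x u * sin (th * t)) s (th * G s - x u * (th * cos (th * s))).
    apply: (d_eq (d_plus (DK s) (d_opp (is_derive_scal _ s (x u) _ (d_sin th s))))); req; ring.
  apply: (d_eq (d_plus (d_mult Dg Dg) (d_mult Dk Dk))); req; ring.
rewrite E0 /E in Et.
have h1 := Rle_0_sqr (G t - x u * cos (th * t)).
have h2 := Rle_0_sqr (K t - x u * sin (th * t)).
rewrite /Rsqr in h1 h2.
split.
  have : (G t - x u * cos (th * t)) * (G t - x u * cos (th * t)) = 0 by lra.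
  by move/Rmult_integral => [] /Rminus_diag_uniq.
have : (K t - x u * sin (th * t)) * (K t - x u * sin (th * t)) = 0 by lra.
by move/Rmult_integral => [] /Rminus_diag_uniq.
Qed.
End Series.


Section JEigen.
Variables (k i : nat).
Hypothesis ik : (i <= k)%N.
Local Notation X := ('I_(2 * k)).
Local Notation V := (Jvert k).
Local Notation A := (Jadj k i).

Definition indp (S : {set X}) (w : V) : R := if S \subset val w then 1 else 0.

Lemma card_as_sum (b : pred V) : #|[set w | b w]| = (\sum_(w : V) (b w : nat))%N.
Proof.
rewrite -sum1_card big_mkcond /=; apply: eq_bigr => w _; rewrite inE.
by case: (b w).
Qed.

Lemma sum_ind (z : V) (S : {set X}) :
  \rsum_(w : V) (INR (A z w) * indp S w) = INR (@Nc k i z S).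
Proof.
rewrite /Nc card_as_sum INR_sum; apply: eq_bigr => w _; rewrite /indp.
by case: (A z w); case: (S \subset val w) => /=; ring.
Qed.

Lemma cardI1 (p : X) (Z : {set X}) : #|[set p] :&: Z| = (p \in Z : nat).
Proof.
case: (boolP (p \in Z)) => h.
  by rewrite (setIidPl _) ?cards1 // sub1set.
suff -> : [set p] :&: Z = set0 by rewrite cards0.
apply/setP => y; rewrite !inE; apply/negbTE/negP => /andP [/eqP -> ]; exact/negP.
Qed.

Lemma cardD1' (p : X) (Z : {set X}) : #|[set p] :\: Z| = (p \notin Z : nat).
Proof. by rewrite setDE cardI1 inE. Qed.

Lemma cardI2 (p q : X) (Z : {set X}) : p != q ->
  #|[set p; q] :&: Z| = ((p \in Z : nat) + (q \in Z : nat))%N.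
Proof.
move=> pq; rewrite setIUl cardsU !cardI1.
suff -> : [set p] :&: Z :&: ([set q] :&: Z) = set0 by rewrite cards0 subn0.
apply/setP => y; rewrite !inE; apply/negbTE/negP => /andP [/andP [/eqP -> _] /andP [/eqP E _]].
by move: pq; rewrite E eqxx.
Qed.

Lemma cardD2 (p q : X) (Z : {set X}) : p != q ->
  #|[set p; q] :\: Z| = ((p \notin Z : nat) + (q \notin Z : nat))%N.
Proof. by move=> pq; rewrite setDE cardI2 // !inE. Qed.

Lemma indp1 p w : indp [set p] w = if p \in val w then 1 else 0.
Proof. by rewrite /indp sub1set. Qed.

Lemma indp2 p q w : indp [set p; q] w = (if p \in val w then 1 else 0) * (if q \in val w then 1 else 0).
Proof.
rewrite /indp subUset !sub1set.
by case: (p \in val w); case: (q \in val w) => /=; ring.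
Qed.

Definition deg := INR (cnt k 0 i * cnt k 0 (k - i)).
Definition N1in := INR (cnt k 1 i * cnt k 0 (k - i)).
Definition N1out := INR (cnt k 0 i * cnt k 1 (k - i)).
Definition th1 := N1in - N1out.
Definition n2 (e : nat) := INR (cnt k e i * cnt k (2 - e) (k - i)).
Definition th2 := n2 2 - 2 * n2 1 + n2 0.

Lemma eig0 (z : V) : \rsum_(w : V) (INR (A z w) * 1) = deg * 1.
Proof.
have := sum_ind z set0; rewrite Nc_formula // set0I set0D cards0 => H.
rewrite /deg Rmult_1_r -H; apply: eq_bigr => w _; rewrite /indp sub0set //.
Qed.

Definition x1 (p q : X) (w : V) : R := indp [set p] w - indp [set q] w.

Lemma Nc1 (z : V) p : INR (@Nc k i z [set p]) = if p \in val z then N1in else N1out.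
Proof.
rewrite Nc_formula // cardI1 cardD1' /N1in /N1out.
by case: (p \in val z).
Qed.

Lemma eig1 (p q : X) (z : V) : \rsum_(w : V) (INR (A z w) * x1 p q w) = th1 * x1 p q z.
Proof.
rewrite /x1; under eq_bigr => w _ do rewrite Rmult_minus_distr_l.
rewrite /Rminus rsum_plus rsum_opp !sum_ind !Nc1 !indp1 /th1.
by case: (p \in val z); case: (q \in val z) => /=; ring.
Qed.

Definition x2 (a1 b1 a2 b2 : X) (w : V) : R :=
  indp [set a1; a2] w - indp [set a1; b2] w - indp [set b1; a2] w + indp [set b1; b2] w.

Lemma Nc2 (z : V) p q : p != q ->
  INR (@Nc k i z [set p; q]) = n2 ((p \in val z : nat) + (q \in val z : nat))%N.
Proof.
move=> pq; rewrite Nc_formula // cardI2 // cardD2 // /n2.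
by case: (p \in val z); case: (q \in val z).
Qed.

Lemma n2_11 : n2 (1 + 1) = n2 2. Proof. by []. Qed.

Lemma eig2 (a1 b1 a2 b2 : X) (z : V) :
  a1 != a2 -> a1 != b2 -> b1 != a2 -> b1 != b2 ->
  \rsum_(w : V) (INR (A z w) * x2 a1 b1 a2 b2 w) = th2 * x2 a1 b1 a2 b2 z.
Proof.
move=> h1 h2 h3 h4; rewrite /x2.
have -> : \rsum_(w : V) (INR (A z w) * (indp [set a1; a2] w - indp [set a1; b2] w -
      indp [set b1; a2] w + indp [set b1; b2] w)) =
   \rsum_(w : V) (INR (A z w) * indp [set a1; a2] w) - \rsum_(w : V) (INR (A z w) * indp [set a1; b2] w)
   - \rsum_(w : V) (INR (A z w) * indp [set b1; a2] w) + \rsum_(w : V) (INR (A z w) * indp [set b1; b2] w).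
  rewrite /Rminus -!rsum_opp -!rsum_plus; apply: eq_bigr => w _; ring.
rewrite !sum_ind !Nc2 // !indp2 /th2.
by case: (a1 \in val z); case: (b1 \in val z); case: (a2 \in val z); case: (b2 \in val z) => /=; rewrite ?n2_11 ?add0n ?addn0; ring.
Qed.
End JEigen.

Open Scope Z_scope.

Lemma arith_contra (j l a b c e k1 i : Z) :
  Z.odd j = true -> Z.even l = true -> Z.odd a = true -> Z.odd c = true ->
  b <> 0 -> c <> 0 -> k1 + 1 <> 0 ->
  (k1 + 1) * a = i * c -> k1 * e = i * b ->
  j * (2 * c * e + 2 * a * b) = l * (2 * b * c) -> False.
Proof.
move=> Hj Hl Ha Hc Hb Hc0 Hk Hka Hke H.
have [l' El] : exists l', l = 2 * l'.
  have := Z.even_spec l; rewrite Hl => [[H1 _]].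
  have [m Hm] := H1 (eq_refl true); by exists m.
have H2 : j * (c * e + a * b) = l' * (2 * b * c).
  rewrite El in H; lia.
have H3 : b * c * (j * i * (2 * k1 + 1) - 2 * l' * (k1 + 1) * k1) = 0.
  have E1 : j * (c * e + a * b) * ((k1 + 1) * k1) =
            j * (c * (k1 * e) * (k1 + 1) + ((k1 + 1) * a) * b * k1) by ring.
  rewrite Hke Hka H2 in E1.
  have : b * c * (j * i * (2 * k1 + 1) - 2 * l' * (k1 + 1) * k1) =
    j * (c * (i * b) * (k1 + 1) + i * c * b * k1) - l' * (2 * b * c) * ((k1 + 1) * k1) by ring.
  rewrite -E1; lia.
have H4 : j * i * (2 * k1 + 1) = 2 * l' * (k1 + 1) * k1.
  have [H5|H5] := (proj1 (Z.mul_eq_0 _ _) H3).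
    have [H6|H6] := (proj1 (Z.mul_eq_0 _ _) H5); [by case: Hb | by case: Hc0].
  lia.
have H6 : (k1 + 1) * (j * (2 * k1 + 1) * a - 2 * l' * k1 * c) = 0.
  have : (k1 + 1) * (j * (2 * k1 + 1) * a - 2 * l' * k1 * c) =
     j * (2 * k1 + 1) * ((k1 + 1) * a) - c * (2 * l' * (k1 + 1) * k1) by ring.
  rewrite Hka -H4 => ->; ring.
have H7 : j * (2 * k1 + 1) * a = 2 * (l' * k1 * c).
  have [H8|H8] := (proj1 (Z.mul_eq_0 _ _) H6); [by case: Hk | lia].
have [j' Ej] : exists j', j = 2 * j' + 1.
  have := Z.odd_spec j; rewrite Hj => [[H1 _]].
  have [m Hm] := H1 (eq_refl true); by exists m.
have [a' Ea] : exists a', a = 2 * a' + 1.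
  have := Z.odd_spec a; rewrite Ha => [[H1 _]].
  have [m Hm] := H1 (eq_refl true); by exists m.
rewrite Ej Ea in H7.
have : (2 * j' + 1) * (2 * k1 + 1) * (2 * a' + 1) =
  2 * (j' * (2 * k1 + 1) * (2 * a' + 1) + k1 * (2 * a' + 1) + a') + 1 by ring.
lia.
Qed.

Close Scope Z_scope.
Open Scope R_scope.

Lemma cos_nat_PI n : cos (INR n * PI) = (-1) ^ n.
Proof.
elim: n => [|n IH]; first by rewrite /= Rmult_0_l cos_0.
rewrite S_INR Rmult_plus_distr_r Rmult_1_l neg_cos IH /=; ring.
Qed.

Lemma cos_Z_PI (z : Z) : cos (IZR z * PI) = (-1) ^ (Z.abs_nat z).
Proof.
rewrite -cos_nat_PI INR_IZR_INZ Nat2Z.inj_abs_nat abs_IZR.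
case: (Rcase_abs (IZR z)) => h.
  by rewrite Rabs_left // -cos_neg; f_equal; ring.
by rewrite Rabs_right.
Qed.

Lemma pow_m1_odd n : (-1) ^ n = (if Nat.odd n then -1 else 1).
Proof.
elim: n => [|n IH] //=.
rewrite IH Nat.odd_succ -Nat.negb_odd; case: (Nat.odd n) => /=; ring.
Qed.

Lemma odd_natZ n : Z.odd (Z.of_nat n) = odd n.
Proof.
elim: n => [|n IH] //.
by rewrite Nat2Z.inj_succ Z.odd_succ -Z.negb_odd IH.
Qed.

Lemma Nat_odd_ssr n : Nat.odd n = odd n.
Proof.
elim: n => [|n IH] //.
by rewrite Nat.odd_succ -Nat.negb_odd IH.
Qed.

Lemma odd_absnat (z : Z) : Nat.odd (Z.abs_nat z) = Z.odd z.
Proof.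
rewrite Nat_odd_ssr -odd_natZ Nat2Z.inj_abs_nat.
by case: z => [|p|p] //=.
Qed.

Lemma cos_m1 x : cos x = -1 -> exists j : Z, x = IZR j * PI /\ Z.odd j = true.
Proof.
move=> H.
have Hs : sin x = 0.
  have := sin2_cos2 x; rewrite H /Rsqr => H2.
  have : sin x * sin x = 0 by lra.
  by case/Rmult_integral.
have [j Hj] := sin_eq_0_0 x Hs.
exists j; split => //.
move: H; rewrite Hj cos_Z_PI pow_m1_odd odd_absnat.
by case: (Z.odd j) => //; lra.
Qed.

Lemma cos_1 x : cos x = 1 -> exists l : Z, x = IZR l * PI /\ Z.even l = true.
Proof.
move=> H.
have Hs : sin x = 0.
  have := sin2_cos2 x; rewrite H /Rsqr => H2.
  have : sin x * sin x = 0 by lra.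
  by case/Rmult_integral.
have [l Hl] := sin_eq_0_0 x Hs.
exists l; split => //.
move: H; rewrite Hl cos_Z_PI pow_m1_odd odd_absnat -Z.negb_even.
by case: (Z.even l) => //=; lra.
Qed.


Lemma gh_val (k i : nat) : (2 <= k)%nat -> (1 <= i)%nat -> (i <= k - 1)%nat ->
  deg k i - th1 k i = INR (2 * 'C(k - 1, i) * 'C(k, i)) /\
  deg k i - th2 k i = INR (2 * 'C(k, i) * 'C(k - 2, i - 1) + 2 * 'C(k - 1, i - 1) * 'C(k - 1, i)).
Proof.
move=> Hk Hi Hik.
have [c0 c0' c1 c1' [Hc Ha Hb _ _]] := binfacts Hk Hi Hik.
rewrite /deg /th1 /th2 /N1in /N1out /n2.
have -> : (2 - 2 = 0)%nat by []. have -> : (2 - 1 = 1)%nat by []. have -> : (2 - 0 = 2)%nat by [].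
rewrite c0 c0' c1 c1' Hc Ha Hb.
rewrite !mult_INR !plus_INR !mult_INR !plus_INR /=.
split; ring.
Qed.

Lemma natZ_mul (m n : nat) : Z.of_nat (m * n) = (Z.of_nat m * Z.of_nat n)%Z.
Proof. exact: Nat2Z.inj_mul. Qed.

Lemma natZ_add (m n : nat) : Z.of_nat (m + n) = (Z.of_nat m + Z.of_nat n)%Z.
Proof. exact: Nat2Z.inj_add. Qed.

Lemma x1_val k (p q : 'I_(2 * k)) (w : Jvert k) :
  x1 p q w = (if p \in val w then 1 else 0) - (if q \in val w then 1 else 0).
Proof. by rewrite /x1 !indp1. Qed.

Theorem mainTheorem9 (k i : nat) :
  (2 <= k)%N -> (1 <= i)%N -> (i <= k - 1)%N ->
  odd 'C(k, i) -> ~~ odd 'C(k - 1, i) ->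
  ~ admits_PST (Jadj k i).
Proof.
move=> Hk Hi Hik Hc Hb [u [v [tau [Huv [Ht [a [b [Ha [Hb2 Hab]]]]]]]]].
have ik : (i <= k)%nat by lia.
have Hsym : forall x y, Jadj k i x y = Jadj k i y x.
  by move=> x y; rewrite /Jadj setIC.
have ea : a = Cr (Jadj k i) u v tau := UL_sequence _ _ _ Ha (Cr_cv _ tau u v).
have eb : b = Si (Jadj k i) u v tau := UL_sequence _ _ _ Hb2 (Si_cv _ tau u v).
remember (Cr (Jadj k i) u v tau) as Cv eqn:ECv.
remember (Si (Jadj k i) u v tau) as Sv eqn:ESv.
have Hn : Cv * Cv + Sv * Sv = 1.
  rewrite -ea -eb; rewrite /= in Hab; lra.
have U := unitary Hsym u Ht.
rewrite (rsum_D1 v) in U.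
have Hz : forall w, w != v -> Cr (Jadj k i) u w tau = 0 /\ Si (Jadj k i) u w tau = 0.
  move=> w hw.
  have Hrest : \big[Rplus/R0]_(w | w != v)
     (Cr (Jadj k i) u w tau * Cr (Jadj k i) u w tau + Si (Jadj k i) u w tau * Si (Jadj k i) u w tau) = 0.
    rewrite -ECv -ESv in U; lra.
  have := @rsum_sub_eq0 _ (fun w => w != v) _ _ Hrest w hw.
  move=> H; have {}H := H (fun w => Rplus_le_le_0_compat _ _ (Rle_0_sqr _) (Rle_0_sqr _)).
  rewrite /= in H; split; nra.
have coll : forall x : Jvert k -> R,
    \rsum_(w : Jvert k) (Cr (Jadj k i) u w tau * x w) = Cv * x v /\
    \rsum_(w : Jvert k) (Si (Jadj k i) u w tau * x w) = Sv * x v.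
  move=> x; rewrite !(rsum_D1 v) !big1 /= -?ECv -?ESv; first (split; ring).
  - by move=> w hw; have [_ ->] := Hz w hw; ring.
  - by move=> w hw; have [-> _] := Hz w hw; ring.
have key : forall x th, (forall z, \rsum_(w : Jvert k) (INR (Jadj k i z w) * x w) = th * x z) ->
    Cv * x v = x u * cos (th * tau) /\ Sv * x v = x u * sin (th * tau).
  move=> x th H; have [E1 E2] := eigen_evol u H Ht; have [F1 F2] := coll x.
  by rewrite -F1 -F2 E1 E2.
have [O1 O2] := key (fun _ => 1) (deg k i) (eig0 ik).
rewrite Rmult_1_r Rmult_1_l in O1; rewrite Rmult_1_r Rmult_1_l in O2.
have cu : (1 < #|val u|)%nat by rewrite (cardz u).
have cuC : (1 < #|~: val u|)%nat by rewrite (cardzC ik u).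
have [a1 [a2 [ha1 ha2 ha12]]] := card_gt1P cu.
have [b1 [b2 [hb1 hb2 hb12]]] := card_gt1P cuC.
rewrite !inE in hb1 hb2.
have X1 : forall p q, p \in val u -> q \notin val u ->
    Cv * x1 p q v = cos (th1 k i * tau) /\ Sv * x1 p q v = sin (th1 k i * tau).
  move=> p q hp hq; have := key (x1 p q) (th1 k i) (eig1 ik p q).
  have -> : x1 p q u = 1 by rewrite x1_val hp (negbTE hq); lra.
  by rewrite !Rmult_1_l.
remember (x1 a1 b1 v) as s eqn:Es.
have Huniq : forall p q, p \in val u -> q \notin val u -> x1 p q v = s.
  move=> p q hp hq; have [P1 P2] := X1 p q hp hq; have [S1 S2] := X1 a1 b1 ha1 hb1.
  rewrite -Es in S1 S2.
  have : (x1 p q v - s) * (x1 p q v - s) * (Cv * Cv + Sv * Sv) = 0.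
    have : (Cv * (x1 p q v - s)) = 0 by lra.
    have : (Sv * (x1 p q v - s)) = 0 by lra.
    move=> h1 h2.
    have -> : (x1 p q v - s) * (x1 p q v - s) * (Cv * Cv + Sv * Sv) =
      (Cv * (x1 p q v - s)) * (Cv * (x1 p q v - s)) + (Sv * (x1 p q v - s)) * (Sv * (x1 p q v - s)) by ring.
    by rewrite h1 h2; ring.
  rewrite Hn Rmult_1_r => /Rmult_integral [] h; lra.
have Hs1 : s <> 1.
  move=> s1; apply: Huv.
  have sub : val u \subset val v.
    apply/subsetP => p hp; have := Huniq p b1 hp hb1; rewrite s1 x1_val.
    by case: (p \in val v); case: (b1 \in val v) => //= ; lra.
  apply: val_inj; apply/eqP; rewrite eqEcard sub /= (cardz u) (cardz v) //.
have Hsq : s * s = 1.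
  have [S1 S2] := X1 a1 b1 ha1 hb1; rewrite -Es in S1 S2.
  have := sin2_cos2 (th1 k i * tau); rewrite /Rsqr -S1 -S2 => h.
  have -> : s * s = s * s * (Cv * Cv + Sv * Sv) by rewrite Hn; ring.
  rewrite -h; ring.
have Hs : s = -1.
  move: Hs1 Hsq; rewrite Es x1_val.
  by case: (a1 \in val v); case: (b1 \in val v) => /= ; lra.
have memb : forall p q, p \in val u -> q \notin val u -> p \notin val v /\ q \in val v.
  move=> p q hp hq; have := Huniq p q hp hq; rewrite Hs x1_val.
  by case: (p \in val v); case: (q \in val v) => //= ; lra.
have [na1 mb1] := memb a1 b1 ha1 hb1.
have [na2 mb2] := memb a2 b2 ha2 hb2.
have d1 : a1 != a2 by [].
have d2 : a1 != b2 by apply/eqP => E; move: hb2; rewrite -E ha1.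
have d3 : b1 != a2 by apply/eqP => E; move: hb1; rewrite E ha2.
have [Y1 Y2] := key (x2 a1 b1 a2 b2) (th2 k i) (fun z => eig2 ik z d1 d2 d3 hb12).
have hx2u : x2 a1 b1 a2 b2 u = 1.
  rewrite /x2 !indp2 ha1 ha2 (negbTE hb1) (negbTE hb2); ring.
have hx2v : x2 a1 b1 a2 b2 v = 1.
  rewrite /x2 !indp2 (negbTE na1) (negbTE na2) mb1 mb2; ring.
rewrite hx2u hx2v !Rmult_1_l !Rmult_1_r in Y1 Y2.
have [S1 S2] := X1 a1 b1 ha1 hb1; rewrite -Es Hs in S1 S2.
have cosA : cos (deg k i * tau - th1 k i * tau) = -1.
  rewrite cos_minus -O1 -O2 -S1 -S2; lra.
have cosB : cos (deg k i * tau - th2 k i * tau) = 1.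
  rewrite cos_minus -O1 -O2 -Y1 -Y2; lra.
have [j [Ej Oj]] := cos_m1 cosA.
have [l [El Ol]] := cos_1 cosB.
have [Eg Eh] := gh_val Hk Hi Hik.
have Hg : INR (2 * 'C(k - 1, i) * 'C(k, i)) * tau = IZR j * PI.
  by rewrite -Eg -Ej; ring.
have Hh : INR (2 * 'C(k, i) * 'C(k - 2, i - 1) + 2 * 'C(k - 1, i - 1) * 'C(k - 1, i)) * tau = IZR l * PI.
  by rewrite -Eh -El; ring.
set G := (2 * 'C(k - 1, i) * 'C(k, i))%nat in Hg.
set H := (2 * 'C(k, i) * 'C(k - 2, i - 1) + 2 * 'C(k - 1, i - 1) * 'C(k - 1, i))%nat in Hh.
have HR : IZR j * INR H = IZR l * INR G.
  have HPI := PI_RGT_0.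
  apply: (Rmult_eq_reg_r PI); last lra.
  have -> : IZR j * INR H * PI = (IZR j * PI) * INR H by ring.
  have -> : IZR l * INR G * PI = (IZR l * PI) * INR G by ring.
  rewrite -Hg -Hh; ring.
rewrite !INR_IZR_INZ -!mult_IZR in HR.
have HZ := eq_IZR _ _ HR.
have [c0 c0' c1 c1' [Hcab Ha' Hb' Hka Hke]] := binfacts Hk Hi Hik.
have Hao : odd 'C(k - 1, i - 1).
  by move: Hc; rewrite Hcab oddD (negbTE Hb) addbF.
apply: (@arith_contra j l (Z.of_nat 'C(k - 1, i - 1)) (Z.of_nat 'C(k - 1, i))
  (Z.of_nat 'C(k, i)) (Z.of_nat 'C(k - 2, i - 1)) (Z.of_nat (k - 1)) (Z.of_nat i)).
- exact: Oj.
- exact: Ol.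
- by rewrite odd_natZ.
- by rewrite odd_natZ.
- have hb0 : 'C(k - 1, i) <> 0%nat by apply/eqP; rewrite -lt0n bin_gt0.
  by move=> E; apply: hb0; apply: Nat2Z.inj; rewrite E.
- have hc0 : 'C(k, i) <> 0%nat.
    apply/eqP; rewrite -lt0n bin_gt0; apply: (leq_trans Hik); exact: leq_subr.
  by move=> E; apply: hc0; apply: Nat2Z.inj; rewrite E.
- have h := Nat2Z.is_nonneg (k - 1); clear -h; lia.
- have -> : (Z.of_nat (k - 1) + 1 = Z.of_nat k)%Z.
    have hk1 : (k - 1 + 1 = k)%nat by rewrite subnK //; exact: ltnW.
    by rewrite -{2}hk1 natZ_add.
  by rewrite -!natZ_mul Hka.
- by rewrite -!natZ_mul Hke.
- rewrite /H /G !natZ_add !natZ_mul in HZ; clear -HZ.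
  change (Z.of_nat 2) with 2%Z in HZ.
  transitivity (l * (2 * Z.of_nat 'C(k - 1, i) * Z.of_nat 'C(k, i)))%Z; last ring.
  rewrite -HZ; ring.
Qed.
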